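(* Let $\Lambda$ be a unital commutative ring, $q$ a non-negative integer, $\mathfrak g$ a Lie algebra over $\Lambda$ and $\mathfrak h$ an ideal of $\mathfrak g$. Then the canonical sequence of Lie algebras $\mathfrak h\wedge^q\mathfrak g\longrightarrow\mathfrak g\wedge^q\mathfrak g\longrightarrow(\mathfrak g/\mathfrak h)\wedge^q(\mathfrak g/\mathfrak h)\longrightarrow0$ is exact.
   Context: All Lie algebras are over $\Lambda$. For an ideal $\mathfrak h$ of $\mathfrak g$ and $q\ge1$, $\mathfrak h\otimes^q\mathfrak g$ is the Lie algebra generated by symbols $h\otimes g$, $\{h\}$ ($h\in\mathfrak h,g\in\mathfrak g$) subject to, for all $h,h'\in\mathfrak h$, $g,g'\in\mathfrak g$, $\lambda,\lambda'\in\Lambda$: (1) $\lambda(h\otimes g)=\lambda h\otimes g=h\otimes\lambda g$; (2) $(h+h')\otimes g=h\otimes g+h'\otimes g$; (3) $h\otimes(g+g')=h\otimes g+h\otimes g'$; (4) $[h,h']\otimes g=h\otimes[h',g]-h'\otimes[h,g]$; (5) $h\otimes[g,g']=[g',h]\otimes g-[g,h]\otimes g'$; (6) $[h\otimes g,h'\otimes g']=[h,g]\otimes[h',g']$; (7) $[\{h'\},h\otimes g]=[qh',h]\otimes g+h\otimes[qh',g]$; (8) $\{\lambda h+\lambda'h'\}=\lambda\{h\}+\lambda'\{h'\}$; (9) $[\{h\},\{h'\}]=qh\otimes qh'$; (10) $\{[h,g]\}=q(h\otimes g)$. For $q=0$, it is generated by the $h\otimes g$ subject to (1)–(6) only. The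 $q$-exterior product $\mathfrak h\wedge^q\mathfrak g$ is the quotient by the relations $h\otimes h=0$, $h\in\mathfrak h$, with images $h\wedge g,\{h\}$. The canonical maps are $h\wedge g\mapsto h\wedge g$, $\{h\}\mapsto\{h\}$ and $g\wedge g'\mapsto (g+\mathfrak h)\wedge(g'+\mathfrak h)$, $\{g\}\mapsto\{g+\mathfrak h\}$. *)

(* Defs.v *)
(* Lie algebras over a unital commutative ring Lambda,
   q-tensor/exterior products defined by their presentation
   (generators & relations), encoded via the universal property of the
   presented Lie algebra. *)
From HB Require Import structures.
From mathcomp Require Import all_boot all_order all_algebra.
Set Implicit Arguments. Unset Strict Implicit. Unset Printing Implicit Defensive.
Import GRing.Theory.
Local Open Scope ring_scope.

Section Lie.
Variable Lam : comPzRingType.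

Definition lie_axioms (V : lmodType Lam) (br : V -> V -> V) : Prop :=
  [/\ forall (a : Lam) x y z, br (a *: x + y) z = a *: br x z + br y z,
      forall (a : Lam) x y z, br x (a *: y + z) = a *: br x y + br x z,
      forall x, br x x = 0 &
      forall x y z, br x (br y z) + br y (br z x) + br z (br x y) = 0].

Definition lie_ideal (V : lmodType Lam) (br : V -> V -> V) (I : V -> Prop) : Prop :=
  [/\ I 0,
      forall (a : Lam) x y, I x -> I y -> I (a *: x + y) &
      forall x y, I x -> I (br x y) /\ I (br y x)].

Definition lie_hom (V W : lmodType Lam) (brV : V -> V -> V) (brW : W -> W -> W)
  (f : V -> W) : Prop :=
  (forall (a : Lam) x y, f (a *: x + y) = a *: f x + f y) /\
  (forall x y, f (brV x y) = brW (f x) (f y)).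

Definition is_lie_quotient (L : lmodType Lam) (brL : L -> L -> L) (M : L -> Prop)
  (Q : lmodType Lam) (brQ : Q -> Q -> Q) (p : L -> Q) : Prop :=
  [/\ lie_axioms brQ, lie_hom brL brQ p,
      (forall y, exists x, p x = y) &
      (forall x, p x = 0 <-> M x)].

(* Relations (1)-(10) of the q-tensor product M (x)^q L, plus the exterior
   relation h (x) h = 0, for an assignment of generators
   w h g  (the image of h (x) g, h in M, g in L) and
   c h    (the image of {h}, h in M).
   For q = 0 there are no generators {h}: this is encoded by requiring c = 0
   on M (and relations (7)-(10) are imposed only for q >= 1). *)
Record qext_rels (q : nat) (L : lmodType Lam) (brL : L -> L -> L) (M : L -> Prop)
  (E : lmodType Lam) (brE : E -> E -> E) (w : L -> L -> E) (c : L -> E) : Prop := {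
  rel1 : forall (a : Lam) h g, M h -> a *: w h g = w (a *: h) g /\ w (a *: h) g = w h (a *: g);
  rel2 : forall h h' g, M h -> M h' -> w (h + h') g = w h g + w h' g;
  rel3 : forall h g g', M h -> w h (g + g') = w h g + w h g';
  rel4 : forall h h' g, M h -> M h' ->
           w (brL h h') g = w h (brL h' g) - w h' (brL h g);
  rel5 : forall h g g', M h -> w h (brL g g') = w (brL g' h) g - w (brL g h) g';
  rel6 : forall h h' g g', M h -> M h' ->
           brE (w h g) (w h' g') = w (brL h g) (brL h' g');
  rel7 : (0 < q)%N -> forall h h' g, M h -> M h' ->
           brE (c h') (w h g) = w (brL (h' *+ q) h) g + w h (brL (h' *+ q) g);
  rel8 : (0 < q)%N -> forall (a a' : Lam) h h', M h -> M h' ->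
           c (a *: h + a' *: h') = a *: c h + a' *: c h';
  rel9 : (0 < q)%N -> forall h h', M h -> M h' -> brE (c h) (c h') = w (h *+ q) (h' *+ q);
  rel10 : (0 < q)%N -> forall h g, M h -> c (brL h g) = (w h g) *+ q;
  rel_q0 : q = 0%N -> forall h, M h -> c h = 0;
  rel_ext : forall h, M h -> w h h = 0 }.

Definition is_qext (q : nat) (L : lmodType Lam) (brL : L -> L -> L) (M : L -> Prop)
  (E : lmodType Lam) (brE : E -> E -> E) (w : L -> L -> E) (c : L -> E) : Prop :=
  [/\ lie_axioms brE,
      qext_rels q brL M brE w c &
      forall (T : lmodType Lam) (brT : T -> T -> T) (w' : L -> L -> T) (c' : L -> T),
        lie_axioms brT -> qext_rels q brL M brT w' c' ->
        (exists f : E -> T, [/\ lie_hom brE brT f,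
            (forall h g, M h -> f (w h g) = w' h g) &
            (forall h, M h -> f (c h) = c' h)]) /\
        (forall f1 f2 : E -> T,
            lie_hom brE brT f1 -> (forall h g, M h -> f1 (w h g) = w' h g) ->
            (forall h, M h -> f1 (c h) = c' h) ->
            lie_hom brE brT f2 -> (forall h g, M h -> f2 (w h g) = w' h g) ->
            (forall h, M h -> f2 (c h) = c' h) ->
            forall x, f1 x = f2 x)].

End Lie.

(* Main.v *)
Require Import Defs.
From HB Require Import structures.
From mathcomp Require Import all_boot all_order all_algebra.
From mathcomp Require Import boolp.
Import GRing.Theory.
Local Open Scope ring_scope.
Set Implicit Arguments. Unset Strict Implicit. Unset Printing Implicit Defensive.


Definition islin (Lam : comPzRingType) (U V : lmodType Lam) (f : U -> V) :=
  forall a x y, f (a *: x + y) = a *: f x + f y.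

Section Lin.
Variables (Lam : comPzRingType) (U V : lmodType Lam) (f : U -> V) (Hf : islin f).
Lemma lin0 : f 0 = 0.
Proof. have h := Hf 1 0 0; rewrite !scale1r addr0 in h.
by apply: (addrI (f 0)); rewrite addr0 -h. Qed.
Lemma linD x y : f (x + y) = f x + f y.
Proof. by have := Hf 1 x y; rewrite !scale1r. Qed.
Lemma linZ a x : f (a *: x) = a *: f x.
Proof. by have := Hf a x 0; rewrite !addr0 lin0 addr0. Qed.
Lemma linN x : f (- x) = - f x.
Proof. by rewrite -scaleN1r linZ scaleN1r. Qed.
Lemma linB x y : f (x - y) = f x - f y.
Proof. by rewrite linD linN. Qed.
Lemma linMn x n : f (x *+ n) = f x *+ n.
Proof. by elim: n => [|n IH]; rewrite ?mulr0n ?lin0 // !mulrS linD IH. Qed.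
End Lin.

Section LieFacts.
Variables (Lam : comPzRingType) (V : lmodType Lam) (br : V -> V -> V) (Hbr : lie_axioms br).
Lemma brlinl z : islin (br^~ z).
Proof. by case: Hbr => h _ _ _ a x y; apply: h. Qed.
Lemma brlinr x : islin (br x).
Proof. by case: Hbr => _ h _ _ a y z; apply: h. Qed.
Lemma br_alt x : br x x = 0.
Proof. by case: Hbr. Qed.
Lemma br_anti x y : br y x = - br x y.
Proof.
have := br_alt (x + y); rewrite (linD (brlinl _)) !(linD (brlinr _)) !br_alt add0r addr0.
by move/eqP; rewrite addr_eq0 => /eqP ->; rewrite opprK.
Qed.
Lemma br_jac_l x y z : br (br x y) z = br x (br y z) - br y (br x z).
Proof.
case: Hbr => _ _ _ J; have := J x y z.
rewrite (br_anti (br x y) z) (br_anti x z) (linN (brlinr _)).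
move/eqP; rewrite subr_eq0 => /eqP <-. done.
Qed.
Lemma br_der y u v : br y (br u v) = br (br y u) v + br u (br y v).
Proof. by rewrite br_jac_l subrK. Qed.
End LieFacts.

Section LieFacts2.
Variables (Lam : comPzRingType) (V : lmodType Lam) (br : V -> V -> V) (Hbr : lie_axioms br).
Lemma br0l z : br 0 z = 0. Proof. exact: (lin0 (brlinl Hbr z)). Qed.
Lemma br0r z : br z 0 = 0. Proof. exact: (lin0 (brlinr Hbr z)). Qed.
Lemma brDl x y z : br (x + y) z = br x z + br y z. Proof. exact: (linD (brlinl Hbr z)). Qed.
Lemma brBl x y z : br (x - y) z = br x z - br y z. Proof. exact: (linB (brlinl Hbr z)). Qed.
Lemma brNl x z : br (- x) z = - br x z. Proof. exact: (linN (brlinl Hbr z)). Qed.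
End LieFacts2.

Definition submod (Lam : comPzRingType) (V : lmodType Lam) (S : V -> Prop) :=
  S 0 /\ forall a x y, S x -> S y -> S (a *: x + y).
Section SubmodFacts.
Variables (Lam : comPzRingType) (V : lmodType Lam) (S : V -> Prop) (HS : submod S).
Lemma sm0 : S 0. Proof. by case: HS. Qed.
Lemma smlin a x y : S x -> S y -> S (a *: x + y). Proof. by case: HS => _ h; apply: h. Qed.
Lemma smD x y : S x -> S y -> S (x + y).
Proof. by move=> hx hy; have := smlin 1 hx hy; rewrite scale1r. Qed.
Lemma smZ a x : S x -> S (a *: x).
Proof. by move=> hx; have := smlin a hx sm0; rewrite addr0. Qed.
Lemma smN x : S x -> S (- x).
Proof. by move=> hx; rewrite -scaleN1r; apply: smZ. Qed.
Lemma smB x y : S x -> S y -> S (x - y).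
Proof. by move=> hx hy; apply: smD => //; apply: smN. Qed.
End SubmodFacts.


Section Quot.
Variables (Lam : comPzRingType) (V : lmodType Lam) (br : V -> V -> V).
Hypothesis Hbr : lie_axioms br.
Variable I : V -> Prop.
Hypothesis HI : lie_ideal br I.

Let I0 : I 0. Proof. by case: HI. Qed.
Let Ilin a x y : I x -> I y -> I (a *: x + y). Proof. by case: HI => _ h _; apply: h. Qed.
Let ID x y : I x -> I y -> I (x + y).
Proof. by move=> hx hy; have := Ilin 1 hx hy; rewrite scale1r. Qed.
Let IZ a x : I x -> I (a *: x).
Proof. by move=> hx; have := Ilin a hx I0; rewrite addr0. Qed.
Let IN x : I x -> I (- x).
Proof. by move=> hx; rewrite -scaleN1r; apply: IZ. Qed.
Let IB x y : I x -> I y -> I (x - y).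
Proof. by move=> hx hy; apply: ID => //; apply: IN. Qed.
Let Ibrl x y : I x -> I (br x y). Proof. by case: HI => _ _ h hx; case: (h x y hx). Qed.
Let Ibrr x y : I x -> I (br y x). Proof. by case: HI => _ _ h hx; case: (h x y hx). Qed.

Definition cls (v : V) : V -> Prop := fun x => I (x - v).
Definition quotT := {P : V -> Prop | exists v, P = cls v}.
HB.instance Definition _ := gen_eqMixin quotT.
HB.instance Definition _ := gen_choiceMixin quotT.

Definition qpi (v : V) : quotT := exist _ (cls v) (ex_intro _ v erefl).
Definition qrep (P : quotT) : V := proj1_sig (cid (proj2_sig P)).
Lemma qrepK P : qpi (qrep P) = P.
Proof. case: P => P hP; rewrite /qrep /qpi /=; apply: eq_exist.
by case: (cid hP) => v /= ->. Qed.
Lemma qpi_eq a b : qpi a = qpi b <-> I (a - b).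
Proof. split.
  move=> /(congr1 (@proj1_sig _ _)) /= e.
  have : cls a a by rewrite /cls subrr.
  by rewrite e.
move=> h; apply: eq_exist; apply: funext => x; apply: propext; rewrite /cls; split=> hx.
  by have := ID hx h; rewrite addrA subrK.
by have := IB hx h; rewrite opprB addrA subrK.
Qed.
Lemma qsurj P : exists v, qpi v = P. Proof. by exists (qrep P); apply: qrepK. Qed.
Lemma qrepP a : I (qrep (qpi a) - a). Proof. by apply/qpi_eq; rewrite qrepK. Qed.

Definition qadd P Q := qpi (qrep P + qrep Q).
Definition qopp P := qpi (- qrep P).
Definition qscale c P := qpi (c *: qrep P).
Definition qbr P Q := qpi (br (qrep P) (qrep Q)).
Definition qzero := qpi 0.

Lemma qaddE a b : qadd (qpi a) (qpi b) = qpi (a + b).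
Proof. apply/qpi_eq; have := ID (qrepP a) (qrepP b).
by rewrite opprD addrACA. Qed.
Lemma qoppE a : qopp (qpi a) = qpi (- a).
Proof. apply/qpi_eq; have := IN (qrepP a). by rewrite opprB opprK addrC. Qed.
Lemma qscaleE c a : qscale c (qpi a) = qpi (c *: a).
Proof. apply/qpi_eq; have := IZ c (qrepP a). by rewrite scalerBr. Qed.
Lemma qbrE a b : qbr (qpi a) (qpi b) = qpi (br a b).
Proof. apply/qpi_eq.
have -> : br (qrep (qpi a)) (qrep (qpi b)) - br a b =
   br (qrep (qpi a) - a) (qrep (qpi b)) + br a (qrep (qpi b) - b).
  by rewrite (linB (brlinl Hbr _)) (linB (brlinr Hbr _)) addrA subrK.
by apply: ID; [apply: Ibrl; apply: qrepP | apply: Ibrr; apply: qrepP].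
Qed.

Lemma qaddA : associative qadd.
Proof. move=> x y z; case: (qsurj x) (qsurj y) (qsurj z) => [a <-] [b <-] [c <-].
by rewrite !qaddE addrA. Qed.
Lemma qaddC : commutative qadd.
Proof. move=> x y; case: (qsurj x) (qsurj y) => [a <-] [b <-]. by rewrite !qaddE addrC. Qed.
Lemma qadd0 : left_id qzero qadd.
Proof. move=> x; case: (qsurj x) => [a <-]. by rewrite qaddE add0r. Qed.
Lemma qaddN : left_inverse qzero qopp qadd.
Proof. move=> x; case: (qsurj x) => [a <-]. by rewrite qoppE qaddE addNr. Qed.

HB.instance Definition _ := GRing.isZmodule.Build quotT qaddA qaddC qadd0 qaddN.

Lemma qscaleA a b v : qscale a (qscale b v) = qscale (a * b) v.
Proof. case: (qsurj v) => [x <-]. by rewrite !qscaleE scalerA. Qed.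
Lemma qscale1 : left_id 1 qscale.
Proof. move=> v; case: (qsurj v) => [x <-]. by rewrite !qscaleE scale1r. Qed.
Lemma qscaleDr : right_distributive qscale (+%R : quotT -> quotT -> quotT).
Proof. move=> a u v; change (qscale a (qadd u v) = qadd (qscale a u) (qscale a v)).
case: (qsurj u) (qsurj v) => [x <-] [y <-].
by rewrite qaddE (qscaleE a x) (qscaleE a y) qaddE qscaleE scalerDr. Qed.
Lemma qscaleDl v : {morph qscale^~ v : a b / a + b >-> (a + b : quotT)}.
Proof. move=> a b; change (qscale (a + b) v = qadd (qscale a v) (qscale b v)).
case: (qsurj v) => [x <-].
by rewrite !qscaleE qaddE scalerDl. Qed.

HB.instance Definition _ := GRing.Zmodule_isLmodule.Build Lam quotT qscaleA qscale1 qscaleDr qscaleDl.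

Lemma quot_ex : exists (W : lmodType Lam) (brW : W -> W -> W) (pi : V -> W),
  is_lie_quotient br I brW pi.
Proof.
exists quotT, qbr, qpi.
have piD a b : qpi a + qpi b = qpi (a + b) by exact: qaddE.
have piZ c a : c *: qpi a = qpi (c *: a) by exact: qscaleE.
have pi0 : (0 : quotT) = qpi 0 by [].
split.
- split.
  + move=> a x y z; case: (qsurj x) (qsurj y) (qsurj z) => [u <-] [v <-] [w <-].
    rewrite piZ piD !qbrE piZ piD; congr qpi; by case: Hbr => h _ _ _; apply: h.
  + move=> a x y z; case: (qsurj x) (qsurj y) (qsurj z) => [u <-] [v <-] [w <-].
    rewrite piZ piD !qbrE piZ piD; congr qpi; by case: Hbr => _ h _ _; apply: h.
  + move=> x; case: (qsurj x) => [u <-]. by rewrite qbrE br_alt.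
  + move=> x y z; case: (qsurj x) (qsurj y) (qsurj z) => [u <-] [v <-] [w <-].
    rewrite !qbrE [qpi (br u _) + _]piD piD pi0; congr qpi; by case: Hbr.
- split; first by move=> a x y; rewrite piZ piD.
  by move=> x y; rewrite qbrE.
- exact: qsurj.
- move=> x; rewrite pi0 qpi_eq subr0; done.
Qed.
End Quot.


Section IdealFacts.
Variables (Lam : comPzRingType) (V : lmodType Lam) (br : V -> V -> V) (M : V -> Prop).
Hypothesis HM : lie_ideal br M.
Lemma M0 : M 0. Proof. by case: HM. Qed.
Lemma Mlin a x y : M x -> M y -> M (a *: x + y). Proof. by case: HM => _ h _; apply: h. Qed.
Lemma MD x y : M x -> M y -> M (x + y).
Proof. by move=> hx hy; have := Mlin 1 hx hy; rewrite scale1r. Qed.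
Lemma MZ a x : M x -> M (a *: x).
Proof. by move=> hx; have := Mlin a hx M0; rewrite addr0. Qed.
Lemma MN x : M x -> M (- x).
Proof. by move=> hx; rewrite -scaleN1r; apply: MZ. Qed.
Lemma MB x y : M x -> M y -> M (x - y).
Proof. by move=> hx hy; apply: MD => //; apply: MN. Qed.
Lemma MMn x n : M x -> M (x *+ n).
Proof. by move=> hx; elim: n => [|n IH]; [rewrite mulr0n; apply: M0 | rewrite mulrS; apply: MD]. Qed.
Lemma Mbrl x y : M x -> M (br x y). Proof. by case: HM => _ _ h hx; case: (h x y hx). Qed.
Lemma Mbrr x y : M x -> M (br y x). Proof. by case: HM => _ _ h hx; case: (h x y hx). Qed.
Lemma Mlin2 a a' x y : M x -> M y -> M (a *: x + a' *: y).
Proof. by move=> hx hy; apply: Mlin => //; apply: MZ. Qed.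
End IdealFacts.

Lemma ideal_True (Lam : comPzRingType) (V : lmodType Lam) (br : V -> V -> V) :
  lie_ideal br (fun _ => True).
Proof. by split. Qed.

Lemma hom_lin (Lam : comPzRingType) (U V : lmodType Lam) (bU : U -> U -> U) (bV : V -> V -> V) (f : U -> V) :
  lie_hom bU bV f -> islin f.
Proof. by case. Qed.

Lemma hom_comp (Lam : comPzRingType) (U V W : lmodType Lam) (bU : U -> U -> U) (bV : V -> V -> V) (bW : W -> W -> W) (f : U -> V) (g : V -> W) :
  lie_hom bU bV f -> lie_hom bV bW g -> lie_hom bU bW (fun x => g (f x)).
Proof. by case=> f1 f2 [g1 g2]; split=> *; rewrite ?f1 ?g1 ?f2 ?g2. Qed.

Lemma hom_id (Lam : comPzRingType) (U : lmodType Lam) (bU : U -> U -> U) : lie_hom bU bU id.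
Proof. by split. Qed.

Ltac msolve HM := solve [ done | apply: (MD HM); msolve HM | apply: (MZ HM); msolve HM
   | apply: (MN HM); msolve HM | apply: (MB HM); msolve HM | apply: (MMn HM); msolve HM
   | apply: (Mbrl HM); msolve HM | apply: (Mbrr HM); msolve HM ].
Ltac Mside HM := try (msolve HM).

Lemma rels_inj (Lam : comPzRingType) q (L : lmodType Lam) (brL : L -> L -> L) (M : L -> Prop) (E T : lmodType Lam)
  (brE : E -> E -> E) (brT : T -> T -> T) (w : L -> L -> E) (c : L -> E) (iota : T -> E) (w' : L -> L -> T) (c' : L -> T) :
  lie_ideal brL M -> injective iota -> lie_hom brT brE iota ->
  (forall h g, M h -> iota (w' h g) = w h g) -> (forall h, M h -> iota (c' h) = c h) ->
  qext_rels q brL M brE w c -> qext_rels q brL M brT w' c'.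
Proof.
move=> HM inj [Hl Hb] Hw Hc [r1 r2 r3 r4 r5 r6 r7 r8 r9 r10 r0 re]; split.
- move=> a h g Mh; split; apply: inj; rewrite ?(linZ Hl) !Hw; Mside HM; by case: (r1 a h g Mh).
- move=> h h' g Mh Mh'; apply: inj; rewrite ?(linD Hl) !Hw; Mside HM; by apply: r2.
- move=> h g g' Mh; apply: inj; rewrite ?(linD Hl) !Hw; Mside HM; by apply: r3.
- move=> h h' g Mh Mh'; apply: inj; rewrite ?(linB Hl) !Hw; Mside HM; by apply: r4.
- move=> h g g' Mh; apply: inj; rewrite ?(linB Hl) !Hw; Mside HM; by apply: r5.
- move=> h h' g g' Mh Mh'; apply: inj; rewrite Hb !Hw; Mside HM; by apply: r6.
- move=> qp h h' g Mh Mh'; apply: inj; rewrite Hb (linD Hl) !Hw ?Hc; Mside HM; by apply: r7.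
- move=> qp a a' h h' Mh Mh'; apply: inj; rewrite (linD Hl) !(linZ Hl) !Hc; Mside HM; by apply: r8.
- move=> qp h h' Mh Mh'; apply: inj; rewrite Hb !Hw ?Hc; Mside HM; exact: (r9 qp h h' Mh Mh').
- move=> qp h g Mh; apply: inj; rewrite (linMn Hl) !Hw ?Hc; Mside HM; by apply: r10.
- move=> q0 h Mh; apply: inj; rewrite (lin0 Hl) Hc //; by apply: r0.
- move=> h Mh; apply: inj; rewrite (lin0 Hl) Hw //; by apply: re.
Qed.

Lemma rels_hom (Lam : comPzRingType) q (L : lmodType Lam) (brL : L -> L -> L) (M : L -> Prop)
  (E T : lmodType Lam) (brE : E -> E -> E) (brT : T -> T -> T) (w : L -> L -> E) (c : L -> E)
  (phi : E -> T) :
  lie_hom brE brT phi -> qext_rels q brL M brE w c ->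
  qext_rels q brL M brT (fun h g => phi (w h g)) (fun h => phi (c h)).
Proof.
move=> [Hl Hb] [r1 r2 r3 r4 r5 r6 r7 r8 r9 r10 r0 re]; split.
- move=> a h g Mh; case: (r1 a h g Mh) => e1 e2; by rewrite -e2 -e1 (linZ Hl).
- by move=> h h' g Mh Mh'; rewrite r2 // (linD Hl).
- by move=> h g g' Mh; rewrite r3 // (linD Hl).
- by move=> h h' g Mh Mh'; rewrite r4 // (linB Hl).
- by move=> h g g' Mh; rewrite r5 // (linB Hl).
- by move=> h h' g g' Mh Mh'; rewrite -Hb r6.
- by move=> qp h h' g Mh Mh'; rewrite -Hb r7 // (linD Hl).
- by move=> qp a a' h h' Mh Mh'; rewrite r8 // (linD Hl) !(linZ Hl).
- by move=> qp h h' Mh Mh'; rewrite -Hb r9.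
- by move=> qp h g Mh; rewrite r10 // (linMn Hl).
- by move=> q0 h Mh; rewrite r0 // (lin0 Hl).
- by move=> h Mh; rewrite re // (lin0 Hl).
Qed.

Lemma surj_ind (A B : Type) (p : A -> B) : (forall y, exists x, p x = y) ->
  forall (P : B -> Prop), (forall g, P (p g)) -> forall x, P x.
Proof. by move=> ps P HP x; case: (ps x) => g <-. Qed.

Lemma rels_push (Lam : comPzRingType) q (L Q T : lmodType Lam) (brL : L -> L -> L)
  (brQ : Q -> Q -> Q) (brT : T -> T -> T) (p : L -> Q)
  (w' : Q -> Q -> T) (c' : Q -> T) (w0 : L -> L -> T) (c0 : L -> T) :
  lie_hom brL brQ p -> (forall y, exists x, p x = y) ->
  (forall g g', w' (p g) (p g') = w0 g g') -> (forall g, c' (p g) = c0 g) ->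
  qext_rels q brL (fun _ => True) brT w0 c0 ->
  qext_rels q brQ (fun _ => True) brT w' c'.
Proof.
move=> [pl pb] ps Hw Hc [r1 r2 r3 r4 r5 r6 r7 r8 r9 r10 r0 re].

split.
- move=> a h g _; move: h g; apply: (surj_ind ps) => h; apply: (surj_ind ps) => g.
  rewrite -!(linZ pl) !Hw; exact: r1.
- move=> h h' g _ _; move: h h' g; apply: (surj_ind ps) => h; apply: (surj_ind ps) => h'; apply: (surj_ind ps) => g.
  rewrite -!(linD pl) !Hw; exact: r2.
- move=> h g g' _; move: h g g'; apply: (surj_ind ps) => h; apply: (surj_ind ps) => g; apply: (surj_ind ps) => g'.
  rewrite -!(linD pl) !Hw; exact: r3.
- move=> h h' g _ _; move: h h' g; apply: (surj_ind ps) => h; apply: (surj_ind ps) => h'; apply: (surj_ind ps) => g.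
  rewrite -!pb !Hw; exact: r4.
- move=> h g g' _; move: h g g'; apply: (surj_ind ps) => h; apply: (surj_ind ps) => g; apply: (surj_ind ps) => g'.
  rewrite -!pb !Hw; exact: r5.
- move=> h h' g g' _ _; move: h h' g g'; apply: (surj_ind ps) => h; apply: (surj_ind ps) => h'; apply: (surj_ind ps) => g; apply: (surj_ind ps) => g'.
  rewrite -!pb !Hw; exact: r6.
- move=> qp h h' g _ _; move: h h' g; apply: (surj_ind ps) => h; apply: (surj_ind ps) => h'; apply: (surj_ind ps) => g.
  rewrite -!(linMn pl) -!pb !Hw !Hc; exact: r7.
- move=> qp a a' h h' _ _; move: h h'; apply: (surj_ind ps) => h; apply: (surj_ind ps) => h'.
  rewrite -!(linZ pl) -!(linD pl) !Hc; exact: r8.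
- move=> qp h h' _ _; move: h h'; apply: (surj_ind ps) => h; apply: (surj_ind ps) => h'.
  rewrite -!(linMn pl) !Hw !Hc; exact: r9.
- move=> qp h g _; move: h g; apply: (surj_ind ps) => h; apply: (surj_ind ps) => g.
  rewrite -!pb !Hw !Hc; exact: r10.
- move=> q0 h _; move: h; apply: (surj_ind ps) => h. rewrite !Hc; exact: r0.
- move=> h _; move: h; apply: (surj_ind ps) => h. rewrite !Hw; exact: re.
Qed.


Section Sub.
Variables (Lam : comPzRingType) (V : lmodType Lam) (br : V -> V -> V).
Hypothesis Hbr : lie_axioms br.
Variable S : V -> Prop.
Hypothesis S0 : S 0.
Hypothesis Slin : forall a x y, S x -> S y -> S (a *: x + y).
Hypothesis Sbr : forall x y, S x -> S y -> S (br x y).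

Let SD x y : S x -> S y -> S (x + y).
Proof. by move=> hx hy; have := Slin 1 hx hy; rewrite scale1r. Qed.
Let SZ a x : S x -> S (a *: x).
Proof. by move=> hx; have := Slin a hx S0; rewrite addr0. Qed.
Let SN x : S x -> S (- x).
Proof. by move=> hx; rewrite -scaleN1r; apply: SZ. Qed.

Definition subT := {x : V | S x}.
HB.instance Definition _ := gen_eqMixin subT.
HB.instance Definition _ := gen_choiceMixin subT.

Definition sval' (x : subT) : V := proj1_sig x.
Lemma sval_inj : injective sval'.
Proof. by move=> [x hx] [y hy] /= e; apply: eq_exist. Qed.

Definition sadd (x y : subT) : subT := exist _ (sval' x + sval' y) (SD (proj2_sig x) (proj2_sig y)).
Definition sopp (x : subT) : subT := exist _ (- sval' x) (SN (proj2_sig x)).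
Definition sscale a (x : subT) : subT := exist _ (a *: sval' x) (SZ a (proj2_sig x)).
Definition sbr (x y : subT) : subT := exist _ (br (sval' x) (sval' y)) (Sbr (proj2_sig x) (proj2_sig y)).
Definition szero : subT := exist _ 0 S0.

Lemma saddA : associative sadd.
Proof. by move=> x y z; apply: sval_inj; rewrite /= addrA. Qed.
Lemma saddC : commutative sadd.
Proof. by move=> x y; apply: sval_inj; rewrite /= addrC. Qed.
Lemma sadd0 : left_id szero sadd.
Proof. by move=> x; apply: sval_inj; rewrite /= add0r. Qed.
Lemma saddN : left_inverse szero sopp sadd.
Proof. by move=> x; apply: sval_inj; rewrite /= addNr. Qed.
HB.instance Definition _ := GRing.isZmodule.Build subT saddA saddC sadd0 saddN.
Lemma sscaleA a b v : sscale a (sscale b v) = sscale (a * b) v.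
Proof. by apply: sval_inj; rewrite /= scalerA. Qed.
Lemma sscale1 : left_id 1 sscale.
Proof. by move=> v; apply: sval_inj; rewrite /= scale1r. Qed.
Lemma sscaleDr : right_distributive sscale (+%R : subT -> subT -> subT).
Proof. by move=> a u v; apply: sval_inj; rewrite /= scalerDr. Qed.
Lemma sscaleDl v : {morph sscale^~ v : a b / a + b >-> (a + b : subT)}.
Proof. by move=> a b; apply: sval_inj; rewrite /= scalerDl. Qed.
HB.instance Definition _ := GRing.Zmodule_isLmodule.Build Lam subT sscaleA sscale1 sscaleDr sscaleDl.

Lemma sval_hom : lie_hom sbr br sval'.
Proof. by split. Qed.

Lemma sbr_lie : lie_axioms sbr.
Proof.
case: Hbr => h1 h2 h3 h4; split.
- by move=> a x y z; apply: sval_inj; rewrite /= h1.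
- by move=> a x y z; apply: sval_inj; rewrite /= h2.
- by move=> x; apply: sval_inj; rewrite /= h3.
- by move=> x y z; apply: sval_inj; rewrite /= h4.
Qed.

Definition wrap (v : V) : subT :=
  match pselect (S v) with left h => exist _ v h | right _ => 0 end.
Lemma wrapE v : S v -> sval' (wrap v) = v.
Proof. by rewrite /wrap; case: pselect. Qed.

Lemma qext_ind_sub q (L : lmodType Lam) (brL : L -> L -> L) (M : L -> Prop)
  (w : L -> L -> V) (c : L -> V) :
  lie_ideal brL M -> is_qext q brL M br w c ->
  (forall h g, M h -> S (w h g)) -> (forall h, M h -> S (c h)) -> forall x, S x.
Proof.
move=> HM [Eax R U] Sw Sc x.
have R' : qext_rels q brL M sbr (fun h g => wrap (w h g)) (fun h => wrap (c h)).
  apply: (rels_inj HM sval_inj sval_hom _ _ R).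
  - by move=> h g Mh; rewrite wrapE //; apply: Sw.
  - by move=> h Mh; rewrite wrapE //; apply: Sc.
have [[f [fh fw fc]] _] := U subT sbr _ _ sbr_lie R'.
have e : forall x, sval' (f x) = x.
  apply: (U V br w c Hbr R).2 (hom_comp fh sval_hom) _ _ (hom_id br) _ _ => //.
  - by move=> h g Mh; rewrite fw // wrapE //; apply: Sw.
  - by move=> h Mh; rewrite fc // wrapE //; apply: Sc.
by rewrite -(e x); apply: (proj2_sig (f x)).
Qed.
End Sub.


Lemma qext_ind (Lam : comPzRingType) q (L E : lmodType Lam) (brL : L -> L -> L) (M : L -> Prop)
  (brE : E -> E -> E) (w : L -> L -> E) (c : L -> E) :
  lie_ideal brL M -> is_qext q brL M brE w c ->
  forall S : E -> Prop, S 0 -> (forall a x y, S x -> S y -> S (a *: x + y)) ->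
  (forall x y, S x -> S y -> S (brE x y)) ->
  (forall h g, M h -> S (w h g)) -> (forall h, M h -> S (c h)) -> forall x, S x.
Proof.
move=> HM HE S S0 Sl Sb Sw Sc x; case: (HE) => Eax _ _.
exact: (qext_ind_sub Eax S0 Sl Sb HM HE Sw Sc).
Qed.

Section TrueRels.
Variables (Lam : comPzRingType) (q : nat) (L E : lmodType Lam) (brL : L -> L -> L)
  (brE : E -> E -> E) (w : L -> L -> E) (c : L -> E).
Hypothesis R : qext_rels q brL (fun _ => True) brE w c.
Lemma wl_true g : islin (fun h => w h g).
Proof. case: R => r1 r2 *; move=> a x y /=. by rewrite r2 // -(proj1 (r1 a x g I)). Qed.
Lemma wr_true h : islin (w h).
Proof. case: R => r1 r2 r3 *; move=> a x y /=.
by rewrite r3 // -(proj2 (r1 a h x I)) -(proj1 (r1 a h x I)). Qed.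
Lemma w0l g : w 0 g = 0. Proof. exact: (lin0 (wl_true g)). Qed.
Lemma wBl x y g : w (x - y) g = w x g - w y g. Proof. exact: (linB (wl_true g)). Qed.
Lemma wDl x y g : w (x + y) g = w x g + w y g. Proof. exact: (linD (wl_true g)). Qed.
Lemma wBr h x y : w h (x - y) = w h x - w h y. Proof. exact: (linB (wr_true h)). Qed.
Lemma wDr h x y : w h (x + y) = w h x + w h y. Proof. exact: (linD (wr_true h)). Qed.
Lemma wanti h g : w h g = - w g h.
Proof.
have := rel_ext R (h := h + g) I; rewrite wDl !wDr (rel_ext R (h := h) I) (rel_ext R (h := g) I) add0r addr0.
by move/eqP; rewrite addr_eq0 => /eqP.
Qed.
Lemma c_true : islin c.
Proof.
move=> a x y; have [q0|qp] := posnP q.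
  by rewrite !(rel_q0 R q0) // scaler0 addr0.
by have := rel8 R qp a 1 (h := x) (h' := y) I I; rewrite !scale1r.
Qed.
Lemma cB x y : c (x - y) = c x - c y. Proof. exact: (linB c_true). Qed.
Lemma c0 : c 0 = 0. Proof. exact: (lin0 c_true). Qed.
End TrueRels.

Unset Implicit Arguments.
Theorem proposition3p2 (Lam : comPzRingType) (q : nat)
  (G : lmodType Lam) (brG : G -> G -> G) (HG : lie_axioms brG)
  (H : G -> Prop) (HH : lie_ideal brG H)
  (Q : lmodType Lam) (brQ : Q -> Q -> Q) (p : G -> Q)
  (Hp : is_lie_quotient brG H brQ p)
  (E1 : lmodType Lam) (brE1 : E1 -> E1 -> E1) (w1 : G -> G -> E1) (c1 : G -> E1)
  (HE1 : is_qext q brG H brE1 w1 c1)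
  (E2 : lmodType Lam) (brE2 : E2 -> E2 -> E2) (w2 : G -> G -> E2) (c2 : G -> E2)
  (HE2 : is_qext q brG (fun _ => True) brE2 w2 c2)
  (E3 : lmodType Lam) (brE3 : E3 -> E3 -> E3) (w3 : Q -> Q -> E3) (c3 : Q -> E3)
  (HE3 : is_qext q brQ (fun _ => True) brE3 w3 c3)
  (f1 : E1 -> E2) (Hf1 : lie_hom brE1 brE2 f1)
  (Hf1w : forall h g, H h -> f1 (w1 h g) = w2 h g)
  (Hf1c : forall h, H h -> f1 (c1 h) = c2 h)
  (f2 : E2 -> E3) (Hf2 : lie_hom brE2 brE3 f2)
  (Hf2w : forall g g', f2 (w2 g g') = w3 (p g) (p g'))
  (Hf2c : forall g, f2 (c2 g) = c3 (p g)) :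
  (forall y : E2, f2 y = 0 <-> exists x : E1, f1 x = y) /\
  (forall z : E3, exists y : E2, f2 y = z).
Proof.
case: Hp => Qax [pl pb] psurj pker.
have pL : islin p := pl.
pose sg x := proj1_sig (cid (psurj x)).
have sgK x : p (sg x) = x := proj2_sig (cid (psurj x)).
case: (HE1) => E1ax R1 U1; case: (HE2) => E2ax R2 U2; case: (HE3) => E3ax R3 U3.
case: (Hf1) => f1l f1b; case: (Hf2) => f2l f2b.
pose IM y := exists x, f1 x = y.
have IMsub : submod IM.
  split; first by exists 0; rewrite (lin0 f1l).
  by move=> a _ _ [x1 <-] [x2 <-]; exists (a *: x1 + x2); rewrite f1l.
have IMw u v : H u -> IM (w2 u v) by move=> hu; exists (w1 u v); rewrite Hf1w.
have IMw' u v : H u -> IM (w2 v u).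
  by move=> hu; rewrite (wanti R2); apply: (smN IMsub); apply: IMw.
have IMc u : H u -> IM (c2 u) by move=> hu; exists (c1 u); rewrite Hf1c.
have zh : lie_hom brE1 brE3 (fun _ => 0).
  by split=> [a x y|x y]; [rewrite scaler0 addr0 | rewrite br_alt].
have f2f1 : forall x, f2 (f1 x) = 0.
  apply: (U1 E3 brE3 _ _ E3ax (rels_hom zh R1)).2 (hom_comp Hf1 Hf2) _ _ zh _ _ => //.
  - move=> h g Hh; rewrite Hf1w // Hf2w.
    have -> : p h = 0 by apply/pker.
    exact: (w0l R3).
  - move=> h Hh; rewrite Hf1c // Hf2c.
    have -> : p h = 0 by apply/pker.
    exact: (c0 R3).
have inner y : (forall h k, H h -> IM (brE2 y (w2 h k))) ->
    (forall h, H h -> IM (brE2 y (c2 h))) -> forall x, IM (brE2 y (f1 x)).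
  move=> Hw Hc; apply: (qext_ind HH HE1 (S := fun x => IM (brE2 y (f1 x)))).
  - by rewrite (lin0 f1l) (br0r E2ax); apply: (sm0 IMsub).
  - move=> a x1 x2 h1 h2; rewrite f1l (brlinr E2ax y); exact: (smlin IMsub).
  - move=> x1 x2 [z1 e1] [z2 e2]; rewrite f1b (br_der E2ax) -e1 -e2.
    by exists (brE1 z1 x2 + brE1 x1 z2); rewrite (linD f1l) !f1b.
  - by move=> h g Hh; rewrite Hf1w //; apply: Hw.
  - by move=> h Hh; rewrite Hf1c //; apply: Hc.
have IMbr : forall y x, IM (brE2 y (f1 x)).
  apply: (qext_ind (ideal_True brG) HE2 (S := fun y => forall x, IM (brE2 y (f1 x)))).
  - by move=> x; rewrite (br0l E2ax); apply: (sm0 IMsub).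
  - move=> a y1 y2 h1 h2 x; case: (E2ax) => bl _ _ _; rewrite bl; exact: (smlin IMsub).
  - move=> y1 y2 h1 h2 x; rewrite (br_jac_l E2ax).
    have [x2 e2] := h2 x; have [x3 e3] := h1 x.
    rewrite -e2 -e3; apply: (smB IMsub); [exact: h1 | exact: h2].
  - move=> a b _; apply: inner.
    + move=> h k Hh; rewrite (rel6 R2) //; apply: IMw'; exact: (Mbrl HH).
    + move=> h Hh; have [q0|qp] := posnP q.
        by rewrite (rel_q0 R2 q0) // (br0r E2ax); apply: (sm0 IMsub).
      rewrite (br_anti E2ax (c2 h)) (rel7 R2 qp) //; apply: (smN IMsub); apply: (smD IMsub).
        by apply: IMw; apply: (Mbrl HH); apply: (MMn HH).
      by apply: IMw'; apply: (Mbrl HH); apply: (MMn HH).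
  - move=> a _; apply: inner.
    + move=> h k Hh; have [q0|qp] := posnP q.
        by rewrite (rel_q0 R2 q0) // (br0l E2ax); apply: (sm0 IMsub).
      rewrite (rel7 R2 qp) //; apply: (smD IMsub); apply: IMw => //.
      exact: (Mbrr HH).
    + move=> h Hh; have [q0|qp] := posnP q.
        by rewrite (rel_q0 R2 q0) // (br0l E2ax); apply: (sm0 IMsub).
      rewrite (rel9 R2 qp) //; apply: IMw'; exact: (MMn HH).
have IMideal : lie_ideal brE2 IM.
  split; [exact: (sm0 IMsub) | exact: (smlin IMsub) |].
  move=> x y [x0 <-]; split; last exact: IMbr.
  rewrite (br_anti E2ax); apply: (smN IMsub); exact: IMbr.
have [W [brW [pi [Wax [pil pib] pisurj piker]]]] := quot_ex E2ax IMideal.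
have pihom : lie_hom brE2 brW pi by split.
have pieq u v : IM (u - v) -> pi u = pi v.
  by move=> h; apply/eqP; rewrite -subr_eq0 -(linB pil); apply/eqP/piker.
have Hsg g : H (sg (p g) - g) by apply/pker; rewrite (linB pL) sgK subrr.
pose w' x y := pi (w2 (sg x) (sg y)).
pose c' x := pi (c2 (sg x)).
have w'E g g' : w' (p g) (p g') = pi (w2 g g').
  apply: pieq.
  have -> : w2 (sg (p g)) (sg (p g')) - w2 g g' =
     w2 (sg (p g) - g) (sg (p g')) + w2 g (sg (p g') - g').
    by rewrite (wBl R2) (wBr R2) addrA subrK.
  by apply: (smD IMsub); [apply: IMw | apply: IMw'].
have c'E g : c' (p g) = pi (c2 g).
  by apply: pieq; rewrite -(cB R2); apply: IMc.
have Rw' := rels_push (conj pl pb) psurj w'E c'E (rels_hom pihom R2).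
have [[s [sh sw sc]] _] := U3 W brW w' c' Wax Rw'.
have surj : forall z, exists y, f2 y = z.
  apply: (qext_ind (ideal_True brQ) HE3 (S := fun z => exists y, f2 y = z)).
  - by exists 0; rewrite (lin0 f2l).
  - by move=> a _ _ [y1 <-] [y2 <-]; exists (a *: y1 + y2); rewrite f2l.
  - by move=> _ _ [y1 <-] [y2 <-]; exists (brE2 y1 y2); rewrite f2b.
  - by move=> x y _; exists (w2 (sg x) (sg y)); rewrite Hf2w !sgK.
  - by move=> x _; exists (c2 (sg x)); rewrite Hf2c sgK.
have sf2 : forall y, s (f2 y) = pi y.
  apply: (U2 W brW _ _ Wax (rels_hom pihom R2)).2 (hom_comp Hf2 sh) _ _ pihom _ _ => //.
  - by move=> g g' _; rewrite Hf2w sw.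
  - by move=> g _; rewrite Hf2c sc.
split=> // y; split.
- by move=> e; apply/piker; rewrite -sf2 e (lin0 (hom_lin sh)).
- by move=> [x <-]; apply: f2f1.
Qed.
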